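(* Let $d\geq 1$ and $\delta\in\{1,2,3\}$. Every $d$-dimensional cube packing with $2^d-\delta$ cubes can be extended to a cube tiling, i.e. there is a $d$-dimensional cube tiling containing all cubes of the packing.
   Context: A $d$-dimensional cube packing is a $4\mathbb{Z}^d$-invariant set of pairwise disjoint translates $z+[0,2[^d$ with $z\in\mathbb{Z}^d$; equivalently a set of representatives $x\in\{0,1,2,3\}^d$ of the $4\mathbb{Z}^d$-orbits of its cubes, two representatives $x,x'$ giving disjoint cubes iff $|x_i-x'_i|=2$ for some coordinate $i$. Its number of cubes is the number of orbits. A cube tiling is a cube packing whose cubes cover $\mathbb{R}^d$ (equivalently, one with $2^d$ cubes). *)

(* Defs.v *)
From mathcomp Require Import all_boot.
Set Implicit Arguments. Unset Strict Implicit. Unset Printing Implicit Defensive.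

(* A cube z + [0,2[^d (z in Z^d), up to translation by 4Z^d, is represented by
   its representative x in {0,1,2,3}^d. *)
Definition rep (d : nat) := {ffun 'I_d -> 'I_4}.

(* Cubes with representatives x, x' are disjoint iff |x_i - x'_i| = 2 for some i. *)
Definition cubes_disjoint (d : nat) (x x' : rep d) : bool :=
  [exists i : 'I_d, (x i + 2 == x' i :> nat) || (x' i + 2 == x i :> nat)].

(* A cube packing: a set of representatives (= set of 4Z^d-orbits of cubes)
   whose cubes are pairwise disjoint.  Its number of cubes is #|P|. *)
Definition cube_packing (d : nat) (P : {set rep d}) : Prop :=
  forall x x', x \in P -> x' \in P -> x != x' -> cubes_disjoint x x'.

Definition cube_contains (d : nat) (x y : rep d) : bool :=
  [forall i : 'I_d, (y i + 4 - x i) %% 4 <= 1].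

(* Since all cubes have
   integer corners, covering R^d is equivalent to covering every integer point,
   and by 4Z^d-invariance it suffices to consider y in {0,1,2,3}^d. *)
Definition cube_tiling (d : nat) (T : {set rep d}) : Prop :=
  cube_packing T /\ forall y : rep d, exists2 x, x \in T & cube_contains x y.

(* Main.v *)
Require Import Defs.
From mathcomp Require Import all_boot.
From mathcomp Require Import zify.
Set Implicit Arguments. Unset Strict Implicit. Unset Printing Implicit Defensive.

Definition sh (a : 'I_4) (k : nat) : 'I_4 := @Ordinal 4 ((a + k) %% 4) (@ltn_pmod _ 4 isT).
Definition in1 (a b : 'I_4) : bool := (b + 4 - a) %% 4 <= 1.

Lemma in1E a b : in1 a b = (b == a) || (b == sh a 1).
Proof. by case: a b => [[|[|[|[|//]]]] ?] [[|[|[|[|//]]]] ?]. Qed.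

Lemma part4 a t : in1 a t (+) in1 a (sh t 2).
Proof. by case: a t => [[|[|[|[|//]]]] ?] [[|[|[|[|//]]]] ?]. Qed.

Lemma card_in1 a : #|[pred v | in1 a v]| = 2.
Proof.
rewrite (@eq_card _ _ [set a; sh a 1]); last by move=> v; rewrite !inE in1E.
by rewrite cards2; case: a => [[|[|[|[|//]]]] ?].
Qed.

Lemma cardfam (d : nat) (F : 'I_d -> pred 'I_4) :
  #|pfamily (ord0 : 'I_4) predT F| = \prod_(k < d) #|F k|.
Proof. by rewrite card_pfamily foldrE big_map big_enum. Qed.

Lemma containsE d (x y : rep d) : cube_contains x y = [forall i, in1 (x i) (y i)].
Proof. by []. Qed.

Definition upd d (y : rep d) (i : 'I_d) (v : 'I_4) : rep d :=
  [ffun k => if k == i then v else y k].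

Definition inF d (S : {set 'I_d}) (a y : rep d) :=
  [forall k, (k \notin S) ==> (y k == a k)].
Definition hole d (P : {set rep d}) (y : rep d) :=
  [forall x in P, ~~ cube_contains x y].
Definition meets d (S : {set 'I_d}) (a x : rep d) :=
  [exists y, inF S a y && cube_contains x y].
Definition PF d (P : {set rep d}) S (a : rep d) := [set x in P | meets S a x].
Definition hcube d (P : {set rep d}) S (a x : rep d) :=
  [forall y, (inF S a y && cube_contains x y) ==> hole P y].

Lemma C1 d (S : {set 'I_d}) (a : rep d) : #|[set y | inF S a y]| = 4 ^ #|S|.
Proof.
have -> : [set y | inF S a y] =
   [set y in pfamily (ord0 : 'I_4) predT (fun k => if k \in S then predT else pred1 (a k))].
  apply/setP => y; rewrite !in_set; apply/forallP/pfamilyP => [H|[_ H] k].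
    split; first by apply/subsetP.
    move=> k _; have := H k; case: (k \in S) => //=.
  by apply/implyP => kS; have := H k isT; rewrite (negbTE kS) /= inE.
rewrite cardsE cardfam -prod_nat_const (bigID (mem S)) /=.
rewrite [X in _ * X]big1 ?muln1; last by move=> k /negbTE ->; rewrite card1.
by apply: eq_bigr => k ->; rewrite card_ord.
Qed.

Lemma C2 d (S : {set 'I_d}) (a x : rep d) : meets S a x ->
  #|[set y | inF S a y && cube_contains x y]| = 2 ^ #|S|.
Proof.
move=> /existsP[y0 /andP[/forallP Hy0 /forallP Cy0]].
have -> : [set y | inF S a y && cube_contains x y] =
   [set y in pfamily (ord0 : 'I_4) predT
       (fun k => if k \in S then [pred v | in1 (x k) v] else pred1 (a k))].
  apply/setP => y; rewrite !in_set; apply/andP/pfamilyP => [[/forallP H /forallP C]|[_ H]].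
    split; first by apply/subsetP.
    move=> k _; have := H k; have := C k; case: (k \in S) => //= ? /eqP ->.
  split; apply/forallP => k; have := H k isT; case kS: (k \in S) => //=.
  - by rewrite inE => /eqP ->; have := Hy0 k; rewrite kS /= => /eqP <-; apply: Cy0.
rewrite cardsE cardfam -prod_nat_const (bigID (mem S)) /=.
rewrite [X in _ * X]big1 ?muln1; last by move=> k /negbTE ->; rewrite card1.
by apply: eq_bigr => k ->; rewrite card_in1.
Qed.

Lemma in1_disj a b c : in1 a c -> in1 b c -> ~~ ((a + 2 == b :> nat) || (b + 2 == a :> nat)).
Proof. by case: a b c => [[|[|[|[|//]]]] ?] [[|[|[|[|//]]]] ?] [[|[|[|[|//]]]] ?]. Qed.

Lemma uniq_cover d (P : {set rep d}) : cube_packing P ->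
  forall x x' y, x \in P -> x' \in P -> cube_contains x y -> cube_contains x' y -> x = x'.
Proof.
move=> HP x x' y xP x'P /forallP C /forallP C'; apply/eqP; apply/negPn/negP => ne.
have /existsP[i Hi] := HP x x' xP x'P ne.
by have := in1_disj (C i) (C' i); rewrite Hi.
Qed.

Lemma C3 d (P : {set rep d}) S (a : rep d) : cube_packing P ->
  #|[set y | inF S a y && ~~ hole P y]| = #|PF P S a| * 2 ^ #|S|.
Proof.
move=> HP.
rewrite -sum1_card -sum_nat_const.
transitivity (\sum_y \sum_(x in PF P S a) ((inF S a y && cube_contains x y) : nat)).
  rewrite big_mkcond /=; apply: eq_bigr => y _; rewrite inE.
  case Fy: (inF S a y) => /=; last by rewrite big1.
  case: (boolP (hole P y)) => Hy /=.
    rewrite big1 // => x; rewrite inE => /andP[xP _].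
    by move/forallP: Hy => /(_ x); rewrite xP /= => /negbTE ->.
  move: Hy; rewrite negb_forall => /existsP[x0]; rewrite negb_imply negbK => /andP[x0P C0].
  have x0F : x0 \in PF P S a by rewrite inE x0P; apply/existsP; exists y; rewrite Fy.
  rewrite (bigD1 x0) //= C0 big1 // => x /andP[]; rewrite inE => /andP[xP _] ne.
  case Cx: (cube_contains x y) => //.
  by move/eqP: ne; rewrite (uniq_cover HP xP x0P Cx C0).
rewrite exchange_big /=; apply: eq_bigr => x; rewrite inE => /andP[_ mx].
by rewrite -(C2 mx) -sum1_card [RHS]big_mkcond; apply: eq_bigr => y _; rewrite inE; case: (_ && _).
Qed.

Lemma in1_refl a : in1 a a.
Proof. by case: a => [[|[|[|[|//]]]] ?]. Qed.

Lemma contains_refl d (x : rep d) : cube_contains x x.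
Proof. by apply/forallP => i; apply: in1_refl. Qed.

Lemma D0 d (P : {set rep d}) S (a : rep d) : cube_packing P ->
  #|PF P S a| <= 2 ^ #|S|.
Proof.
move=> HP.
have : #|[set y | inF S a y && ~~ hole P y]| <= #|[set y | inF S a y]|.
  by apply: subset_leq_card; apply/subsetP => y; rewrite !inE => /andP[].
rewrite C1 C3 //.
have -> : 4 ^ #|S| = 2 ^ #|S| * 2 ^ #|S| by rewrite -expnMn.
by rewrite leq_pmul2r ?expn_gt0.
Qed.

Lemma H0 d (P : {set rep d}) S (a : rep d) : cube_packing P ->
  #|PF P S a| = 2 ^ #|S| -> forall y, inF S a y -> ~~ hole P y.
Proof.
move=> HP E y Fy.
have : [set y | inF S a y && ~~ hole P y] == [set y | inF S a y].
  rewrite eqEcard C1 C3 // E.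
  have -> : 4 ^ #|S| = 2 ^ #|S| * 2 ^ #|S| by rewrite -expnMn.
  rewrite leqnn andbT.
  by apply/subsetP => z; rewrite !inE => /andP[].
by move/eqP/setP => /(_ y); rewrite !inE Fy /=.
Qed.

Lemma H1 d (P : {set rep d}) S (a x : rep d) : cube_packing P ->
  #|PF P S a| + 1 = 2 ^ #|S| -> inF S a x -> hcube P S a x ->
  forall y, inF S a y -> hole P y -> cube_contains x y.
Proof.
move=> HP E Fx /forallP Hx y Fy hy.
set A := [set y | inF S a y && ~~ hole P y].
set B := [set y | inF S a y && cube_contains x y].
have mx : meets S a x by apply/existsP; exists x; rewrite Fx contains_refl.
have dAB : A :&: B = set0.
  apply/setP => z; rewrite !inE; apply/negP => /andP[/andP[Fz hz] /andP[_ cz]].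
  by move: (Hx z); rewrite Fz cz /= (negbTE hz).
have : A :|: B == [set y | inF S a y].
  rewrite eqEcard C1 cardsU dAB cards0 subn0 C3 // C2 //.
  have -> : 4 ^ #|S| = 2 ^ #|S| * 2 ^ #|S| by rewrite -expnMn.
  rewrite [X in _ <= X](_ : _ = (#|PF P S a| + 1) * 2 ^ #|S|); last by rewrite mulnDl mul1n.
  rewrite E leqnn andbT.
  by apply/subsetP => z; rewrite !inE => /orP[] /andP[].
move/eqP/setP => /(_ y); by rewrite !inE Fy hy /= => ->.
Qed.

Lemma upd_same d (y : rep d) i v : upd y i v i = v.
Proof. by rewrite /upd ffunE eqxx. Qed.
Lemma upd_other d (y : rep d) i v k : k != i -> upd y i v k = y k.
Proof. by rewrite /upd ffunE => /negbTE ->. Qed.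

Lemma layer_inF d (S : {set 'I_d}) i (a y : rep d) t : i \in S ->
  inF (S :\ i) (upd a i t) y = inF S a y && (y i == t).
Proof.
move=> iS; apply/forallP/andP => [H|[/forallP H /eqP yi] k].
  split; last by have := H i; rewrite !inE eqxx /= upd_same.
  apply/forallP => k; apply/implyP => kS.
  have := H k; rewrite !inE (negbTE kS) andbF /= upd_other //.
  by apply: contraNneq kS => ->.
apply/implyP; rewrite !inE negb_and negbK; case: eqP => [->|/eqP ne] /=.
  by rewrite upd_same yi.
by move=> kS; rewrite upd_other //; have := H k; rewrite kS.
Qed.

Lemma layer_inF2 d (S : {set 'I_d}) i (a y : rep d) : i \in S ->
  inF S a y -> inF (S :\ i) (upd a i (y i)) y.
Proof. by move=> iS Fy; rewrite layer_inF // Fy eqxx. Qed.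

Lemma layer_meets d (S : {set 'I_d}) i (a x : rep d) t : i \in S ->
  meets (S :\ i) (upd a i t) x = meets S a x && in1 (x i) t.
Proof.
move=> iS; apply/existsP/andP => [[y]|[/existsP[y /andP[Fy Cy]] xt]].
  rewrite layer_inF // => /andP[/andP[Fy /eqP yi] Cy]; split.
    by apply/existsP; exists y; rewrite Fy.
  by rewrite -yi; move/forallP: Cy; apply.
exists (upd y i t); rewrite layer_inF // upd_same eqxx andbT; apply/andP; split.
  apply/forallP => k; apply/implyP => kS; rewrite upd_other; last first.
    by apply: contraNneq kS => ->.
  by move/forallP: Fy => /(_ k); rewrite kS.
apply/forallP => k; case: (eqVneq k i) => [->|ne]; first by rewrite upd_same.
by rewrite upd_other //; move/forallP: Cy; apply.
Qed.

Lemma layer_card d (P : {set rep d}) (S : {set 'I_d}) i (a : rep d) t : i \in S ->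
  #|PF P (S :\ i) (upd a i t)| + #|PF P (S :\ i) (upd a i (sh t 2))| = #|PF P S a|.
Proof.
move=> iS; rewrite -(cardsID [set x : rep d | in1 (x i) t] (PF P S a)); congr (_ + _).
  apply: eq_card => x; rewrite !inE layer_meets //; by case: (x \in P); case: (meets S a x).
apply: eq_card => x; rewrite !inE layer_meets //.
have := part4 (x i) t; case: (in1 (x i) t); case: (in1 (x i) (sh t 2)) => //= _;
  by case: (x \in P); case: (meets S a x).
Qed.

Lemma contains_upd d (x p : rep d) i v :
  cube_contains x (upd p i v) = in1 (x i) v && [forall k, (k != i) ==> in1 (x k) (p k)].
Proof.
apply/forallP/andP => [H|[H1 /forallP H2] k].
  split; first by have := H i; rewrite upd_same.
  by apply/forallP => k; apply/implyP => ne; have := H k; rewrite upd_other.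
case: (eqVneq k i) => [->|ne]; first by rewrite upd_same.
by rewrite upd_other //; have := H2 k; rewrite ne.
Qed.

Lemma contains_upd_self d (x p : rep d) i :
  cube_contains x p = cube_contains x (upd p i (p i)).
Proof. by congr cube_contains; apply/ffunP => k; rewrite /upd ffunE; case: eqP => [->|]. Qed.

Lemma F1 a c : in1 a (sh c 1) || in1 a (sh c 3) -> ~~ in1 a c -> in1 a (sh c 2).
Proof. by case: a c => [[|[|[|[|//]]]] ?] [[|[|[|[|//]]]] ?]. Qed.
Lemma F2 a c : in1 a (sh c 3) -> in1 a (sh c 1) -> False.
Proof. by case: a c => [[|[|[|[|//]]]] ?] [[|[|[|[|//]]]] ?]. Qed.

Lemma LP d (P : {set rep d}) (p : rep d) i u w : cube_packing P ->
  ((u == sh (p i) 1) && (w == sh (p i) 3)) || ((u == sh (p i) 3) && (w == sh (p i) 1)) ->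
  hole P p -> ~~ hole P (upd p i u) -> hole P (upd p i w).
Proof.
move=> HP uw /forallP hp.
rewrite negb_forall => /existsP[x]; rewrite negb_imply negbK => /andP[xP Cx].
apply/forallP => x'; apply/implyP => x'P; apply/negP => Cx'.
have hx := hp x; have hx' := hp x'; rewrite xP in hx; rewrite x'P in hx'.
rewrite (@contains_upd_self _ _ _ i) contains_upd in hx.
rewrite (@contains_upd_self _ _ _ i) contains_upd in hx'.
move: Cx Cx'; rewrite !contains_upd => /andP[xu ox] /andP[x'w ox'].
rewrite ox andbT in hx; rewrite ox' andbT in hx'.
have q1 : cube_contains x (upd p i (sh (p i) 2)).
  by rewrite contains_upd ox andbT; apply: F1 hx; case/orP: uw => /andP[/eqP <- _]; rewrite xu ?orbT.
have q2 : cube_contains x' (upd p i (sh (p i) 2)).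
  by rewrite contains_upd ox' andbT; apply: F1 hx'; case/orP: uw => /andP[_ /eqP <-]; rewrite x'w ?orbT.
have e := uniq_cover HP xP x'P q1 q2; subst x'.
by case/orP: uw => /andP[/eqP eu /eqP ew]; subst u w; [apply: (F2 x'w xu) | apply: (F2 xu x'w)].
Qed.

Lemma LPp d (P : {set rep d}) (p : rep d) i : cube_packing P ->
  hole P p -> ~~ hole P (upd p i (sh (p i) 3)) -> hole P (upd p i (sh (p i) 1)).
Proof. by move=> HP; apply: LP => //; rewrite !eqxx ?orbT. Qed.
Lemma LPm d (P : {set rep d}) (p : rep d) i : cube_packing P ->
  hole P p -> ~~ hole P (upd p i (sh (p i) 1)) -> hole P (upd p i (sh (p i) 3)).
Proof. by move=> HP; apply: LP => //; rewrite !eqxx ?orbT. Qed.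

Lemma upd_upd d (y : rep d) i u v : upd (upd y i u) i v = upd y i v.
Proof. by apply/ffunP => k; rewrite !ffunE; case: eqP. Qed.
Lemma upd_id d (y : rep d) i : upd y i (y i) = y.
Proof. by apply/ffunP => k; rewrite !ffunE; case: eqP => [->|]. Qed.
Lemma upd_comm d (y : rep d) i j u v : i != j ->
  upd (upd y i u) j v = upd (upd y j v) i u.
Proof.
move=> ne; apply/ffunP => k; rewrite !ffunE.
case: (eqVneq k j) => [kj|kj]; case: (eqVneq k i) => [ki|ki] //.
by move: ne; rewrite -ki -kj eqxx.
Qed.
Lemma inF_upd d (S : {set 'I_d}) (a y : rep d) i u : i \in S -> inF S a y -> inF S a (upd y i u).
Proof.
move=> iS /forallP F; apply/forallP => k; apply/implyP => kS.
by rewrite upd_other ?(implyP (F k)) //; apply: contraNneq kS => ->.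
Qed.

Lemma sh13 u : sh (sh u 1) 3 = u. Proof. by case: u => [[|[|[|[|//]]]] ?]; apply/val_inj. Qed.
Lemma sh31 u : sh (sh u 3) 1 = u. Proof. by case: u => [[|[|[|[|//]]]] ?]; apply/val_inj. Qed.
Lemma sh11 u : sh (sh u 1) 1 = sh u 2. Proof. by case: u => [[|[|[|[|//]]]] ?]; apply/val_inj. Qed.
Lemma sh33 u : sh (sh u 3) 3 = sh u 2. Proof. by case: u => [[|[|[|[|//]]]] ?]; apply/val_inj. Qed.
Lemma sh12 u : sh (sh u 1) 2 = sh u 3. Proof. by case: u => [[|[|[|[|//]]]] ?]; apply/val_inj. Qed.
Lemma sh21 u : sh (sh u 2) 1 = sh u 3. Proof. by case: u => [[|[|[|[|//]]]] ?]; apply/val_inj. Qed.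
Lemma sh23 u : sh (sh u 2) 3 = sh u 1. Proof. by case: u => [[|[|[|[|//]]]] ?]; apply/val_inj. Qed.
Lemma sh32 u : sh (sh u 3) 2 = sh u 1. Proof. by case: u => [[|[|[|[|//]]]] ?]; apply/val_inj. Qed.

Lemma lift d (P : {set rep d}) (S : {set 'I_d}) i (a x : rep d) t : i \in S -> x i = t ->
  hcube P (S :\ i) (upd a i t) x -> hcube P (S :\ i) (upd a i (sh t 1)) x ->
  inF S a x -> inF S a x && hcube P S a x.
Proof.
move=> iS xi /forallP H0 /forallP H1 Fx; rewrite Fx /=; apply/forallP => y.
apply/implyP => /andP[Fy Cy].
have : in1 (x i) (y i) := forallP Cy i; rewrite xi in1E => /orP[] /eqP yi.
  by have := H0 y; rewrite layer_inF // Fy yi eqxx Cy.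
by have := H1 y; rewrite layer_inF // Fy yi eqxx Cy.
Qed.

Lemma contains_move d (x y : rep d) i v :
  cube_contains x y -> in1 (x i) v -> cube_contains x (upd y i v).
Proof.
move=> /forallP C xv; rewrite contains_upd xv /=.
by apply/forallP => k; apply/implyP => _; apply: C.
Qed.

Lemma inF_layer_upd d (S : {set 'I_d}) i (a y : rep d) t u : i \in S ->
  inF (S :\ i) (upd a i t) y -> inF (S :\ i) (upd a i u) (upd y i u).
Proof.
move=> iS; rewrite !layer_inF // upd_same eqxx andbT => /andP[Fy _].
exact: inF_upd.
Qed.

Lemma caseA1 d (P : {set rep d}) (S : {set 'I_d}) i (a x : rep d) t :
  cube_packing P -> i \in S ->
  (forall y, inF (S :\ i) (upd a i t) y -> ~~ hole P y) ->
  inF (S :\ i) (upd a i (sh t 1)) x -> hcube P (S :\ i) (upd a i (sh t 1)) x ->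
  exists x, inF S a x && hcube P S a x.
Proof.
move=> HP iS Hno Fx Hx.
have xi : x i = sh t 1 by move: Fx; rewrite layer_inF // => /andP[_ /eqP].
exists x; apply: (lift iS xi Hx); last by move: Fx; rewrite layer_inF // => /andP[].
apply/forallP => y; apply/implyP => /andP[Fy Cy].
have Fy' := inF_layer_upd (sh t 1) iS Fy.
have hy' : hole P (upd y i (sh t 1)).
  move/forallP: Hx => /(_ (upd y i (sh t 1))); rewrite Fy' /= => /implyP; apply.
  by apply: contains_move Cy _; rewrite xi in1_refl.
have yi : y i = sh t 2 by move: Fy; rewrite layer_inF // sh11 => /andP[_ /eqP].
have := @LPp _ _ _ i HP hy'; rewrite !upd_upd upd_same sh13 sh11 -yi upd_id; apply.
by apply: Hno; apply: inF_layer_upd Fy.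
Qed.

Lemma in1_S u : in1 u (sh u 1). Proof. by case: u => [[|[|[|[|//]]]] ?]. Qed.

Lemma contains_transfer d (x x' y : rep d) i :
  (forall k, k != i -> x k = x' k) -> in1 (x' i) (y i) ->
  cube_contains x y -> cube_contains x' y.
Proof.
move=> E h /forallP C; apply/forallP => k.
by case: (eqVneq k i) => [->//|ne]; rewrite -E //; apply: C.
Qed.

Lemma caseA3 d (P : {set rep d}) (S : {set 'I_d}) i (a x : rep d) t :
  cube_packing P -> i \in S ->
  (forall y, inF (S :\ i) (upd a i t) y -> ~~ hole P y) ->
  inF (S :\ i) (upd a i (sh t 3)) x -> hcube P (S :\ i) (upd a i (sh t 3)) x ->
  exists x, inF S a x && hcube P S a x.
Proof.
move=> HP iS Hno Fx Hx.
have xi : x i = sh t 3 by move: Fx; rewrite layer_inF // => /andP[_ /eqP].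
set x2 := upd x i (sh t 2).
have x2i : x2 i = sh t 2 by rewrite upd_same.
have E : forall k, k != i -> x2 k = x k by move=> k; apply: upd_other.
have Fx2 : inF (S :\ i) (upd a i (sh t 2)) x2 by apply: inF_layer_upd Fx.
exists x2; apply: (lift iS x2i); last by move: Fx2; rewrite layer_inF // => /andP[].
  apply/forallP => y; apply/implyP => /andP[Fy Cy].
  have Fy' := inF_layer_upd (sh t 3) iS Fy.
  have hy' : hole P (upd y i (sh t 3)).
    move/forallP: Hx => /(_ (upd y i (sh t 3))); rewrite Fy' /= => /implyP; apply.
    apply: (contains_transfer E); first by rewrite upd_same xi in1_refl.
    by apply: contains_move Cy _; rewrite x2i -sh21 in1_S.
  have yi : y i = sh t 2 by move: Fy; rewrite layer_inF // => /andP[_ /eqP].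
  have := @LPm _ _ _ i HP hy'; rewrite !upd_upd upd_same sh31 sh33 -yi upd_id; apply.
  by apply: Hno; apply: inF_layer_upd Fy.
rewrite sh21; apply/forallP => y; apply/implyP => /andP[Fy Cy].
move/forallP: Hx => /(_ y); rewrite Fy /= => /implyP; apply.
apply: (contains_transfer E) Cy.
by move: Fy; rewrite layer_inF // => /andP[_ /eqP ->]; rewrite xi in1_refl.
Qed.

Lemma in1_cases a c : in1 a c -> (a = c) \/ (a = sh c 3).
Proof. by rewrite in1E => /orP[] /eqP ->; [left | right; rewrite sh13]. Qed.
Lemma in1_P u : in1 (sh u 3) u. Proof. by case: u => [[|[|[|[|//]]]] ?]. Qed.
Lemma nin1_a u : ~~ in1 (sh u 1) u. Proof. by case: u => [[|[|[|[|//]]]] ?]. Qed.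
Lemma nin1_b u : ~~ in1 (sh u 3) (sh u 1). Proof. by case: u => [[|[|[|[|//]]]] ?]. Qed.
Lemma nin1_c u : ~~ in1 u (sh u 3). Proof. by case: u => [[|[|[|[|//]]]] ?]. Qed.
Lemma sh_neq u : sh u 3 != u. Proof. by case: u => [[|[|[|[|//]]]] ?]. Qed.

Lemma stair (h : 'I_4 -> 'I_4 -> bool) t b xj x'j zi zj :
  (forall v, h t v = in1 xj v) -> (forall v, h (sh t 1) v = in1 x'j v) ->
  (forall u v, h u v -> ~~ h (sh u 3) v -> h (sh u 1) v) ->
  (forall u v, h u v -> ~~ h (sh u 1) v -> h (sh u 3) v) ->
  xj != x'j -> in1 xj b -> in1 x'j b ->
  (forall u v, in1 zi u -> in1 zj v -> ~~ h u v) -> in1 zi (sh t 3) -> in1 zj b -> False.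
Proof.
move=> Ht Ht1 Lp Lm ne xb x'b Z zit zjb.
have zi2 : zi = sh t 2.
  case: (in1_cases zit) => [zi3|->]; last by rewrite sh33.
  by subst zi; have := Z _ _ (in1_P t) zjb; rewrite Ht xb.
subst zi.
have Zt1 : in1 (sh t 2) (sh t 3) by rewrite -sh21 in1_S.
have Zt2 : in1 (sh t 2) (sh t 2) by apply: in1_refl.
case: (in1_cases xb) => exb; case: (in1_cases x'b) => ex'b; subst xj x'j;
  rewrite ?eqxx in ne => //; case: (in1_cases zjb) => ezj; subst zj.
- (* xj = b, x'j = b-1, zj = b : v = b+1 *)
  have h1 : h t (sh b 1) by rewrite Ht in1_S.
  have h2 : ~~ h (sh t 1) (sh b 1) by rewrite Ht1 nin1_b.
  by have := Lm _ _ h1 h2; apply/negP/Z => //; apply: in1_S.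
- (* xj = b, x'j = b-1, zj = b-1 : v = b-1, u = t+1 *)
  have h1 : h (sh t 1) (sh b 3) by rewrite Ht1 in1_refl.
  have h2 : ~~ h (sh (sh t 1) 3) (sh b 3) by rewrite sh13 Ht nin1_c.
  by have := Lp _ _ h1 h2; rewrite sh11; apply/negP/Z => //; apply: in1_refl.
- (* xj = b-1, x'j = b, zj = b : u = t+1, v = b+1 *)
  have h1 : h (sh t 1) (sh b 1) by rewrite Ht1 in1_S.
  have h2 : ~~ h (sh (sh t 1) 3) (sh b 1) by rewrite sh13 Ht nin1_b.
  by have := Lp _ _ h1 h2; rewrite sh11; apply/negP/Z => //; apply: in1_S.
- (* xj = b-1, x'j = b, zj = b-1 : u = t, v = b-1 *)
  have h1 : h t (sh b 3) by rewrite Ht in1_refl.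
  have h2 : ~~ h (sh t 1) (sh b 3) by rewrite Ht1 nin1_c.
  by have := Lm _ _ h1 h2; apply/negP/Z => //; apply: in1_refl.
Qed.

Lemma contains_q d (x y : rep d) i j u v : i != j ->
  (forall k, k != i -> k != j -> in1 (x k) (y k)) ->
  cube_contains x (upd (upd y i u) j v) = in1 (x i) u && in1 (x j) v.
Proof.
move=> ne O; apply/forallP/andP => [H|[hu hv] k].
  split; last by have : in1 (x j) (upd (upd y i u) j v j) := H j; rewrite upd_same.
  by have : in1 (x i) (upd (upd y i u) j v i) := H i; rewrite upd_other // upd_same.
case: (eqVneq k j) => [->|kj]; first by rewrite upd_same.
rewrite upd_other //; case: (eqVneq k i) => [->|ki]; first by rewrite upd_same.
by rewrite upd_other //; apply: O.
Qed.

Lemma q_upd d (y : rep d) i j u v w : i != j ->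
  upd (upd (upd y i u) j v) i w = upd (upd y i w) j v.
Proof. by move=> ne; rewrite -upd_comm // upd_upd. Qed.

Lemma q_i d (y : rep d) i j u v : i != j -> upd (upd y i u) j v i = u.
Proof. by move=> ne; rewrite upd_other // upd_same. Qed.

Lemma layer_q d (P : {set rep d}) (S : {set 'I_d}) i j (a w y : rep d) s :
  i != j -> inF (S :\ i) (upd a i s) (upd y i s) -> j \in S :\ i -> w i = s ->
  (forall k, k != i -> in1 (w k) (y k)) -> hcube P (S :\ i) (upd a i s) w ->
  (forall y, inF (S :\ i) (upd a i s) y -> hole P y -> cube_contains w y) ->
  forall v, hole P (upd (upd y i s) j v) = in1 (w j) v.
Proof.
move=> ij Fys jS wi O Hw Ew v.
have Fq : inF (S :\ i) (upd a i s) (upd (upd y i s) j v) by apply: inF_upd.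
have O' : forall k, k != i -> k != j -> in1 (w k) (y k) by move=> k ki _; apply: O.
apply/idP/idP => [hq|wv].
  by have := Ew _ Fq hq; rewrite (contains_q _ _ ij O') => /andP[].
move/forallP: Hw => /(_ (upd (upd y i s) j v)); rewrite Fq /= => /implyP; apply.
by rewrite (contains_q _ _ ij O') wi in1_refl.
Qed.

Lemma caseB d (P : {set rep d}) (S : {set 'I_d}) i (a x x' : rep d) t :
  cube_packing P -> i \in S ->
  inF (S :\ i) (upd a i t) x -> hcube P (S :\ i) (upd a i t) x ->
  (forall y, inF (S :\ i) (upd a i t) y -> hole P y -> cube_contains x y) ->
  inF (S :\ i) (upd a i (sh t 1)) x' -> hcube P (S :\ i) (upd a i (sh t 1)) x' ->
  (forall y, inF (S :\ i) (upd a i (sh t 1)) y -> hole P y -> cube_contains x' y) ->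
  exists x, inF S a x && hcube P S a x.
Proof.
move=> HP iS Fx Hx Ex Fx' Hx' Ex'.
have xi : x i = t by move: Fx; rewrite layer_inF // => /andP[_ /eqP].
have x'i : x' i = sh t 1 by move: Fx'; rewrite layer_inF // => /andP[_ /eqP].
case: (boolP [forall k, (k != i) ==> (x k == x' k)]) => [/forallP Eq|].
  exists x; apply: (lift iS xi Hx); last by move: Fx; rewrite layer_inF // => /andP[].
  apply/forallP => y; apply/implyP => /andP[Fy Cy].
  move/forallP: Hx' => /(_ y); rewrite Fy /= => /implyP; apply.
  apply: (contains_transfer (x := x) (i := i)) Cy; first by move=> k ne; apply/eqP; move: (Eq k); rewrite ne.
  by move: Fy; rewrite layer_inF // => /andP[_ /eqP ->]; rewrite x'i in1_refl.
rewrite negb_forall => /existsP[j]; rewrite negb_imply => /andP[ji xj].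
have jS : j \in S :\ i.
  apply: contraNT xj => jS.
  move/forallP: Fx => /(_ j); move/forallP: Fx' => /(_ j); rewrite jS /= !upd_other //.
  by move=> /eqP -> /eqP ->.
have ij : i != j by rewrite eq_sym.
set x0 := upd x i (sh t 3).
have x0i : x0 i = sh t 3 by rewrite upd_same.
have E0 : forall k, k != i -> x0 k = x k by move=> k; apply: upd_other.
have Fx0 : inF (S :\ i) (upd a i (sh t 3)) x0 by apply: inF_layer_upd Fx.
exists x0; apply: (lift iS x0i); last by move: Fx0; rewrite layer_inF // => /andP[].
  apply/forallP => y; apply/implyP => /andP[Fy Cy].
  have yi : y i = sh t 3 by move: Fy; rewrite layer_inF // => /andP[_ /eqP].
  have Cxy : forall k, k != i -> in1 (x k) (y k).
    by move=> k ne; rewrite -E0 //; move/forallP: Cy; apply.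
  apply/negPn/negP => nhy.
  have Fy1 := inF_layer_upd t iS Fy.
  have hy1 : hole P (upd y i t).
    move/forallP: Hx => /(_ (upd y i t)); rewrite Fy1 /= => /implyP; apply.
    apply: (contains_transfer (x := x0) (i := i)); first by [].
      by rewrite upd_same xi in1_refl.
    by apply: contains_move Cy _; rewrite x0i in1_P.
  have Fy2 := inF_layer_upd (sh t 1) iS Fy.
  have hy2 : hole P (upd y i (sh t 1)).
    have := @LPp _ _ _ i HP hy1; rewrite upd_same !upd_upd -yi upd_id; apply; exact: nhy.
  have Cx'y : forall k, k != i -> in1 (x' k) (y k).
    move=> k ki; have /forallP := Ex' _ Fy2 hy2 => /(_ k).
    by rewrite upd_other.
  move: nhy; rewrite negb_forall => /existsP[z]; rewrite negb_imply negbK => /andP[zP Cz].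
  have Oz : forall k, k != i -> k != j -> in1 (z k) (y k) by move=> k _ _; move/forallP: Cz; apply.
  apply: (@stair (fun u v => hole P (upd (upd y i u) j v)) t (y j) (x j) (x' j) (z i) (z j)).
  - exact: (layer_q ij Fy1 jS xi Cxy Hx Ex).
  - exact: (layer_q ij Fy2 jS x'i Cx'y Hx' Ex').
  - by move=> u v; have := @LPp _ _ (upd (upd y i u) j v) i HP; rewrite q_i // !q_upd.
  - by move=> u v; have := @LPm _ _ (upd (upd y i u) j v) i HP; rewrite q_i // !q_upd.
  - exact: xj.
  - exact: Cxy.
  - exact: Cx'y.
  - move=> u v zu zv; apply/negP => /forallP /(_ z); rewrite zP /=.
    by rewrite (contains_q _ _ ij Oz) zu zv.
  - by rewrite -yi; move/forallP: Cz; apply.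
  - by move/forallP: Cz; apply.
rewrite sh31; apply/forallP => y; apply/implyP => /andP[Fy Cy].
move/forallP: Hx => /(_ y); rewrite Fy /= => /implyP; apply.
apply: (contains_transfer (x := x0) (i := i)) Cy; first by [].
by move: Fy; rewrite layer_inF // => /andP[_ /eqP ->]; rewrite xi in1_refl.
Qed.

Lemma sh22 u : sh (sh u 2) 2 = u. Proof. by case: u => [[|[|[|[|//]]]] ?]; apply/val_inj. Qed.

Lemma Phi d (P : {set rep d}) : cube_packing P -> forall n (S : {set 'I_d}), #|S| = n ->
  forall a, 1 <= 2 ^ #|S| - #|PF P S a| <= 3 -> exists x, inF S a x && hcube P S a x.
Proof.
move=> HP; elim=> [|n IH] S cS a.
  move/cards0_eq: cS => ->; rewrite cards0 expn0 => /andP[h _].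
  have P0 : #|PF P set0 a| = 0 by move: h; case: #|_|.
  exists a; apply/andP; split; first by apply/forallP => k; rewrite eqxx implybT.
  apply/forallP => y; apply/implyP => /andP[/forallP Fy _].
  have -> : y = a by apply/ffunP => k; apply/eqP; have := Fy k; rewrite inE.
  apply/forallP => x; apply/implyP => xP; apply/negP => Cx.
  have : x \in PF P set0 a.
    by rewrite inE xP; apply/existsP; exists a; rewrite Cx andbT; apply/forallP => k; rewrite eqxx implybT.
  by move/card0_eq: P0 => ->.
have [i iS] : exists i, i \in S.
  by apply/set0Pn; rewrite -card_gt0 cS.
have cS' : #|S :\ i| = n by move: cS; rewrite (cardsD1 i S) iS add1n => -[].
set N := fun t => #|PF P (S :\ i) (upd a i t)|.
have IHl : forall t, 1 <= 2 ^ n - N t <= 3 ->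
    exists x, inF (S :\ i) (upd a i t) x && hcube P (S :\ i) (upd a i t) x.
  by move=> t h; apply: IH => //; rewrite cS'.
have bd : forall t, N t <= 2 ^ n by move=> t; rewrite -cS'; apply: D0.
have goA : forall t, N t = 2 ^ n ->
    (1 <= 2 ^ n - N (sh t 1) <= 3) \/ (1 <= 2 ^ n - N (sh t 3) <= 3) ->
    exists x, inF S a x && hcube P S a x.
  move=> t Nt [] /IHl [x /andP[Fx Hx]].
    by apply: (caseA1 HP iS _ Fx Hx); apply: H0 => //; rewrite cS'.
  by apply: (caseA3 HP iS _ Fx Hx); apply: H0 => //; rewrite cS'.
have goB : forall t, N t + 1 = 2 ^ n -> N (sh t 1) + 1 = 2 ^ n ->
    exists x, inF S a x && hcube P S a x.
  move=> t N0 N1.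
  have [x /andP[Fx Hx]] : exists x, inF (S :\ i) (upd a i t) x && hcube P (S :\ i) (upd a i t) x.
    by apply: IHl; rewrite -N0 addKn.
  have [x' /andP[Fx' Hx']] : exists x, inF (S :\ i) (upd a i (sh t 1)) x &&
      hcube P (S :\ i) (upd a i (sh t 1)) x.
    by apply: IHl; rewrite -N1 addKn.
  apply: (caseB HP iS Fx Hx _ Fx' Hx'); apply: H1 => //; rewrite cS' //.
set t0 := a i.
have L0 := layer_card P a t0 iS; have L1 := layer_card P a (sh t0 1) iS.
rewrite sh12 in L1.
move: (bd t0) (bd (sh t0 1)) (bd (sh t0 2)) (bd (sh t0 3)).
rewrite cS expnS.
move: goA goB => goA goB.
have gA0 := goA t0; have gA1 := goA (sh t0 1); have gA2 := goA (sh t0 2); have gA3 := goA (sh t0 3).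
have gB0 := goB t0; have gB1 := goB (sh t0 1); have gB2 := goB (sh t0 2); have gB3 := goB (sh t0 3).
rewrite ?sh11 ?sh13 ?sh21 ?sh23 ?sh31 ?sh33 in gA1 gB1 gA2 gB2 gA3 gB3.
rewrite /N in L0 L1 gA0 gA1 gA2 gA3 gB0 gB1 gB2 gB3 *.
move: L0 L1 gA0 gA1 gA2 gA3 gB0 gB1 gB2 gB3.
set A := #|PF P (S :\ i) (upd a i t0)|.
set B := #|PF P (S :\ i) (upd a i (sh t0 1))|.
set C := #|PF P (S :\ i) (upd a i (sh t0 2))|.
set D := #|PF P (S :\ i) (upd a i (sh t0 3))|.
set m := #|PF P S a|.
set M := 2 ^ n.
move=> L0 L1 gA0 gA1 gA2 gA3 gB0 gB1 gB2 gB3 bA bB bC bD hd.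
case: (eqVneq A M) => [eA|nA]; first by apply: gA0 => //; lia.
case: (eqVneq B M) => [eB|nB]; first by apply: gA1 => //; lia.
case: (eqVneq C M) => [eC|nC]; first by apply: gA2 => //; lia.
case: (eqVneq D M) => [eD|nD]; first by apply: gA3 => //; lia.
have [eA|eC] : A + 1 = M \/ C + 1 = M by lia.
  have [eB|eD] : B + 1 = M \/ D + 1 = M by lia.
    by apply: gB0.
  by apply: gB3.
have [eB|eD] : B + 1 = M \/ D + 1 = M by lia.
  by apply: gB1.
by apply: gB2.
Qed.

Lemma common (a b : 'I_4) : ~~ ((a + 2 == b :> nat) || (b + 2 == a :> nat)) ->
  in1 a (if in1 a b then b else a) && in1 b (if in1 a b then b else a).
Proof. by case: a b => [[|[|[|[|//]]]] ?] [[|[|[|[|//]]]] ?]. Qed.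

Lemma disj_of_hcube d (P : {set rep d}) (a x w : rep d) :
  hcube P setT a x -> w \in P -> cubes_disjoint x w.
Proof.
move=> /forallP H wP; rewrite /cubes_disjoint; apply: contraT; rewrite negb_exists => /forallP nd.
set y : rep d := [ffun k => if in1 (x k) (w k) then w k else x k].
have Cxy : cube_contains x y.
  by apply/forallP => k; rewrite /y ffunE; case/andP: (common (nd k)).
have Cwy : cube_contains w y.
  by apply/forallP => k; rewrite /y ffunE; case/andP: (common (nd k)).
have Fy : inF setT a y by apply/forallP => k; rewrite inE.
move: (H y); rewrite Fy Cxy /= => /forallP /(_ w); rewrite wP /=.
by rewrite Cwy.
Qed.

Lemma PF_all d (P : {set rep d}) (a : rep d) : PF P setT a = P.
Proof.
apply/setP => x; rewrite inE; case: (x \in P) => //=.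
by apply/existsP; exists x; rewrite contains_refl andbT; apply/forallP => k; rewrite inE.
Qed.

Lemma extend d : forall delta, delta <= 3 -> forall P : {set rep d},
  cube_packing P -> #|P| + delta = 2 ^ d ->
  exists T : {set rep d}, cube_tiling T /\ P \subset T.
Proof.
set a : rep d := [ffun => ord0].
have cT : #|[set: 'I_d]| = d by rewrite cardsT card_ord.
elim=> [|del IH] hdel P HP cP.
  exists P; split => //; split => // y.
  have := H0 HP (S := setT) (a := a); rewrite PF_all cT -cP addn0 => /(_ erefl y).
  rewrite (_ : inF _ _ _ = true); last by apply/forallP => k; rewrite inE.
  move=> /(_ isT); rewrite negb_forall => /existsP[x]; rewrite negb_imply negbK => /andP[xP Cx].
  by exists x.
have hb : 1 <= 2 ^ #|[set: 'I_d]| - #|PF P setT a| <= 3.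
  by rewrite PF_all cT -cP; apply/andP; split; lia.
have [x /andP[_ Hx]] := Phi HP cT hb.
have xP : x \notin P.
  apply/negP => xP; move/forallP: Hx => /(_ x); rewrite contains_refl andbT.
  rewrite (_ : inF _ _ _ = true); last by apply/forallP => k; rewrite inE.
  by move=> /= /forallP /(_ x); rewrite xP contains_refl.
have HP' : cube_packing (x |: P).
  move=> u w; rewrite !inE => /orP[/eqP ->|uP] /orP[/eqP ->|wP] ne.
  - by rewrite eqxx in ne.
  - exact: disj_of_hcube Hx wP.
  - have := disj_of_hcube Hx uP; rewrite /cubes_disjoint => /existsP[k hk].
    by apply/existsP; exists k; rewrite orbC.
  - exact: HP.
have cP' : #|x |: P| + del = 2 ^ d by rewrite cardsU1 xP add1n addSnnS.
have [T [TT sT]] := IH (ltnW hdel) (x |: P) HP' cP'.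
exists T; split => //; apply: subset_trans sT; exact: subsetUr.
Qed.

Theorem theorem2 (d : nat) (delta : nat) :
  1 <= d -> 1 <= delta <= 3 ->
  forall P : {set rep d},
    cube_packing P -> #|P| + delta = 2 ^ d ->
    exists T : {set rep d}, cube_tiling T /\ P \subset T.
Proof. by move=> _ /andP[_ h] P HP cP; apply: (extend h HP cP). Qed.
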